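(* Let $A$ and $\hat A$ be real $n\times n$ matrices, both in ordered real Schur form, and let $U$ be a real orthogonal matrix with $\hat AU=UA$. Let $m$ be the number of distinct complex conjugate pairs of non-real eigenvalues plus the number of distinct real eigenvalues of $A$. Partition $A$, $\hat A$ and $U$ conformally into $m\times m$ block form, where each diagonal block index corresponds to the maximal set of consecutive diagonal Schur blocks sharing the same eigenvalue(s). Then $U=U_1\oplus U_2\oplus\cdots\oplus U_m$ with each $U_i$ orthogonal.
   Context: A real matrix $A$ is in real Schur form if it is block upper triangular with diagonal blocks $Z_1,\dots,Z_M$ (in this order), where $Z_1,\dots,Z_\ell$ are $2\times 2$ real blocks each having a pair of non-real complex conjugate eigenvalues and $Z_{\ell+1},\dots,Z_M$ are $1\times1$ real blocks ($M=n-\ell$). Writing $\lambda^{(k)}$ for an eigenvalue of $Z_k$, $A$ is in ordered real Schur form if (1) $|\lambda^{(i)}|\le|\lambda^{(j)}|$ whenever $i<j\le\ell$ or $\ell<i<j\le M$, and (2) if in such a case $|\lambda^{(i)}|=|\lambda^{(j)}|$, then $\operatorname{Re}\lambda^{(j)}\le\operatorname{Re}\lambda^{(i)}$. (Under this ordering, diagonal blocks with equal eigenvalues are consecutive.) *)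

(* Defs.v *)
From HB Require Import structures.
From mathcomp Require Import all_boot all_order all_algebra.
From mathcomp Require Import complex.
From mathcomp Require Import boolp.
Set Implicit Arguments. Unset Strict Implicit. Unset Printing Implicit Defensive.
Import Order.TTheory GRing.Theory Num.Theory.

Section Schur.
Variable R : rcfType.

(* Entry of an n x n matrix indexed by natural numbers (0 outside range). *)
Definition mxe (n : nat) (A : 'M[R]_n) (i j : nat) : R :=
  match (insub i : option 'I_n), (insub j : option 'I_n) with
  | Some i', Some j' => A i' j'
  | _, _ => 0%R
  end.

(* Block structure with l leading 2x2 blocks followed by 1x1 blocks
   (0-based indices).  Block k (k < l) occupies rows/cols 2k, 2k+1;
   block k (k >= l) occupies row/col k + l. *)
Definition blk (l p : nat) : nat := if p < l.*2 then p./2 else p - l.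
Definition nblocks (n l : nat) : nat := n - l.

Definition Z2 (n : nat) (A : 'M[R]_n) (k : nat) : 'M[R]_2 :=
  \matrix_(i < 2, j < 2) mxe A (k.*2 + i) (k.*2 + j).

Definition block_eig (n l : nat) (A : 'M[R]_n) (k : nat) (lam : R[i]) : Prop :=
  if k < l then is_true (root (map_poly (real_complex R) (char_poly (Z2 A k))) lam)
  else lam = ((mxe A (k + l) (k + l))%:C)%C.

Definition real_schur (n l : nat) (A : 'M[R]_n) : Prop :=
  [/\ l.*2 <= n,
      (forall i j : 'I_n, blk l j < blk l i -> A i j = 0%R) &
      (forall k, k < l -> forall lam, block_eig l A k lam -> complex.Im lam != 0%R)].

Definition ordered_real_schur (n l : nat) (A : 'M[R]_n) : Prop :=
  real_schur l A /\
  forall i j, i < j < nblocks n l -> ((j < l) || (l <= i)) ->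
    forall li lj, block_eig l A i li -> block_eig l A j lj ->
      (Normc.normc li <= Normc.normc lj)%R /\
      (Normc.normc li = Normc.normc lj -> complex.Re lj <= complex.Re li)%R.

Definition same_eigs (n l : nat) (A : 'M[R]_n) (k k' : nat) : Prop :=
  forall lam, block_eig l A k lam <-> block_eig l A k' lam.

Definition same_run (n l : nat) (A : 'M[R]_n) (k k' : nat) : Prop :=
  forall t, minn k k' <= t <= maxn k k' -> same_eigs l A k t.

(* Rows/columns p and q of the conformal partition lie in the same
   diagonal block index (of the m x m block partition). *)
Definition same_group (n l : nat) (A : 'M[R]_n) (p q : nat) : Prop :=
  same_run l A (blk l p) (blk l q).

Definition same_group_b (n l : nat) (A : 'M[R]_n) (p q : nat) : bool :=
  `[< same_group l A p q >].

Definition orthogonal_mx (n : nat) (U : 'M[R]_n) : Prop := (U^T *m U = 1%:M)%R.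

End Schur.

(* Main.v *)
Require Import Defs.
From HB Require Import structures.
From mathcomp Require Import all_boot all_order all_algebra.
From mathcomp Require Import complex.
From mathcomp Require Import ring lra.
From mathcomp Require boolp.
Import Order.TTheory GRing.Theory Num.Theory.
Local Open Scope ring_scope.
Set Implicit Arguments. Unset Strict Implicit. Unset Printing Implicit Defensive.

Lemma sum2 (R : nmodType) (F : 'I_2 -> R) : \sum_(i < 2) F i = F 0 + F 1.
Proof. rewrite !big_ord_recl big_ord0 addr0; congr (F _ + F _); exact: val_inj. Qed.

Lemma det2 (R : comNzRingType) (M : 'M[R]_2) : \det M = M 0 0 * M 1 1 - M 0 1 * M 1 0.
Proof.
rewrite (expand_det_row _ 0) sum2 /cofactor !det_mx11 !mxE /=.
have -> : lift 0 0 = 1 :> 'I_2 by apply: val_inj.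
have -> : lift 1 0 = 0 :> 'I_2 by apply: val_inj.
rewrite expr0 expr1 mul1r mulN1r mulrN.
done.
Qed.

Lemma char_poly2 (R : comNzRingType) (M : 'M[R]_2) :
  char_poly M = 'X^2 - (M 0 0 + M 1 1)%:P * 'X + (M 0 0 * M 1 1 - M 0 1 * M 1 0)%:P.
Proof.
rewrite /char_poly det2 !mxE /= ?polyCD ?polyCB ?polyCM ?polyCN mulr1n mulr0n polyCM. ring.
Qed.

Section C.
Variable R : rcfType.
Implicit Types x y : R[i].
Lemma ReM x y : complex.Re (x * y) = complex.Re x * complex.Re y - complex.Im x * complex.Im y.
Proof. by case: x; case: y. Qed.
Lemma ImM x y : complex.Im (x * y) = complex.Re x * complex.Im y + complex.Im x * complex.Re y.
Proof. by case: x; case: y. Qed.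
Lemma ReD x y : complex.Re (x + y) = complex.Re x + complex.Re y.
Proof. by case: x; case: y. Qed.
Lemma ImD x y : complex.Im (x + y) = complex.Im x + complex.Im y.
Proof. by case: x; case: y. Qed.
Lemma ReN x : complex.Re (- x) = - complex.Re x.
Proof. by case: x. Qed.
Lemma ImN x : complex.Im (- x) = - complex.Im x.
Proof. by case: x. Qed.
Lemma ceqP x y : complex.Re x = complex.Re y -> complex.Im x = complex.Im y -> x = y.
Proof. by case: x; case: y => /= ? ? ? ? -> ->. Qed.


Lemma ceq0 x : (x == 0) = (complex.Re x == 0) && (complex.Im x == 0).
Proof. by apply/eqP/andP => [->|[/eqP h1 /eqP h2]]; [split | apply: ceqP]. Qed.

Lemma root_quad (t d : R) (z : R[i]) :
  root (map_poly (real_complex R) ('X^2 - t%:P * 'X + d%:P)) z =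
  ((complex.Re z)^+2 - (complex.Im z)^+2 - t * complex.Re z + d == 0) &&
  (2 * complex.Re z * complex.Im z - t * complex.Im z == 0).
Proof.
rewrite /root !(rmorphD, rmorphN, rmorphM, rmorphXn) /= map_polyX !map_polyC /= !hornerE.
rewrite ceq0 !ReD !ImD !ReN !ImN !ReM !ImM /=.
case: z => a b /=.
have -> : a * a - b * b - (t * a - 0 * b) + d = a ^+ 2 - b ^+ 2 - t * a + d by ring.
by have -> : a * b + b * a - (t * b + 0 * a) + 0 = 2 * a * b - t * b by ring.
Qed.
End C.

From mathcomp Require Import zify.
Lemma mxeE (R : rcfType) n (M : 'M[R]_n) (i j : 'I_n) : mxe M i j = M i j.
Proof. by rewrite /mxe !valK. Qed.



Section G.
Variable R : rcfType.
Definition Gm m (p : R * R) (N : 'M[R]_m) : 'M[R]_m := N *m N - p.1 *: N + p.2 *: 1%:M.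
Definition qa m (N : 'M[R]_m) (S : seq (R * R)) (y : 'cV[R]_m) :=
  foldr (fun p v => Gm p N *m v) y S.

Lemma Gm_mul m p (N : 'M[R]_m) (y : 'cV[R]_m) :
  Gm p N *m y = N *m (N *m y) - p.1 *: (N *m y) + p.2 *: y.
Proof. by rewrite /Gm !mulmxDl mulNmx -mulmxA -!scalemxAl mul1mx. Qed.

Lemma qa0 m (N : 'M[R]_m) S : qa N S 0 = 0.
Proof. by elim: S => //= p S ->; rewrite mulmx0. Qed.

Lemma qa_cat m (N : 'M[R]_m) S1 S2 y : qa N (S1 ++ S2) y = qa N S1 (qa N S2 y).
Proof. by rewrite /qa foldr_cat. Qed.

Lemma qa_inter m (A B U : 'M[R]_m) S y : B *m U = U *m A -> qa B S (U *m y) = U *m qa A S y.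
Proof.
move=> h; have hBU v : B *m (U *m v) = U *m (A *m v) :> 'cV_m by rewrite mulmxA h -mulmxA.
elim: S => //= p S ->.
by rewrite !Gm_mul !hBU mulmxDr mulmxBr !scalemxAr.
Qed.

Lemma sq2 (i : 'I_2) : i = 0 \/ i = 1.
Proof. by case: i => [[|[|//]] ?]; [left|right]; apply: val_inj. Qed.

Definition tdZ (Z : 'M[R]_2) : R * R := (Z 0 0 + Z 1 1, Z 0 0 * Z 1 1 - Z 0 1 * Z 1 0).

Lemma CH2 (Z : 'M[R]_2) : Gm (tdZ Z) Z = 0.
Proof.
apply/matrixP => i j; rewrite /Gm /scalar_mx !mxE !sum2 /=.
case: (sq2 i) => ->; case: (sq2 j) => ->; rewrite /= ?mulr1n ?mulr0n;
  move: (Z 0 0) (Z 0 1) (Z 1 0) (Z 1 1) => a b c e; ring.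
Qed.

Lemma quadpos (t0 d0 t d : R) : t0 ^+ 2 <= 4 * d0 -> t ^+ 2 <= 4 * d -> (t, d) <> (t0, d0) ->
  (t0 - t) ^+ 2 * d0 + (t0 - t) * (d - d0) * t0 + (d - d0) ^+ 2 != 0.
Proof.
move=> h0 h1 hne; apply/eqP => hD.
set a := t0 - t in hD; set b := d - d0 in hD.
have e4 : 4 * ((t0 - t) ^+ 2 * d0 + (t0 - t) * (d - d0) * t0 + (d - d0) ^+ 2) =
   (2 * b + a * t0) ^+ 2 + a ^+ 2 * (4 * d0 - t0 ^+ 2) by rewrite /a /b; ring.
rewrite hD mulr0 in e4.
have p1 : 0 <= (2 * b + a * t0) ^+ 2 by apply: sqr_ge0.
have p2 : 0 <= a ^+ 2 * (4 * d0 - t0 ^+ 2) by apply: mulr_ge0; [apply: sqr_ge0 | lra].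
have z1 : (2 * b + a * t0) ^+ 2 = 0 by lra.
have z2 : a ^+ 2 * (4 * d0 - t0 ^+ 2) = 0 by lra.
move/eqP: z1; rewrite sqrf_eq0 => /eqP z1.
move/eqP: z2; rewrite mulf_eq0 sqrf_eq0 => /orP[/eqP za|/eqP zd].
  apply: hne; move: z1; rewrite /b za mul0r addr0 => /eqP; rewrite mulf_eq0 /= => /orP[|/eqP zb].
    by rewrite pnatr_eq0.
  by move: za zb; rewrite /a => /eqP; rewrite subr_eq0 => /eqP -> /eqP; rewrite subr_eq0 => /eqP ->.
move: z1; rewrite /a /b => z1.
have z3 : (t0 - t) ^+ 2 + (4 * d - t ^+ 2) = 0 by nra.
have p3 : 0 <= (t0 - t) ^+ 2 by apply: sqr_ge0.
have z4 : (t0 - t) ^+ 2 = 0 by lra.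
move/eqP: z4; rewrite sqrf_eq0 subr_eq0 => /eqP et.
apply: hne; rewrite -et in zd *; congr (_, _); nra.
Qed.

Lemma Ginj (Z : 'M[R]_2) (p : R * R) (w : 'cV[R]_2) :
  (tdZ Z).1 ^+ 2 <= 4 * (tdZ Z).2 -> p.1 ^+ 2 <= 4 * p.2 -> p <> tdZ Z ->
  Gm p Z *m w = 0 -> w = 0.
Proof.
case: p => t d; rewrite /tdZ /= => h0 h1 hne hG.
have e := fun i => congr1 (fun M : 'cV_2 => M i 0) hG.
have e0 := e 0; have e1 := e 1; move: e0 e1; rewrite /Gm /scalar_mx !mxE !sum2 /= !mxE !sum2 /= ?mulr1n ?mulr0n.
move=> E1 E2; have hD := quadpos h0 h1 hne; clear e hG.
suff [w0 w1] : w 0 0 = 0 /\ w 1 0 = 0.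
  by apply/matrixP => i j; rewrite (ord1 j); case: (sq2 i) => ->; rewrite mxE.
move: hD E1 E2; move: (Z 0 0) (Z 0 1) (Z 1 0) (Z 1 1) (w 0 0) (w 1 0) => a b c z x y hD E1 E2.
have hx : ((a + z - t) ^+ 2 * (a * z - b * c) + (a + z - t) * (d - (a * z - b * c)) * (a + z) + (d - (a * z - b * c)) ^+ 2) * x = (c * b + z * z - t * z + d * 1) * ((a * a + b * c - t * a + d * 1) * x + (a * b + b * z - t * b + d * 0) * y) - (a * b + b * z - t * b + d * 0) * ((c * a + z * c - t * c + d * 0) * x + (c * b + z * z - t * z + d * 1) * y) by ring.
have hy : ((a + z - t) ^+ 2 * (a * z - b * c) + (a + z - t) * (d - (a * z - b * c)) * (a + z) + (d - (a * z - b * c)) ^+ 2) * y = (a * a + b * c - t * a + d * 1) * ((c * a + z * c - t * c + d * 0) * x + (c * b + z * z - t * z + d * 1) * y) - (c * a + z * c - t * c + d * 0) * ((a * a + b * c - t * a + d * 1) * x + (a * b + b * z - t * b + d * 0) * y) by ring.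
rewrite E1 E2 !mulr0 subrr in hx hy.
by move/eqP: hx; move/eqP: hy; rewrite !mulf_eq0 (negbTE hD) /= => /eqP -> /eqP ->.
Qed.


Lemma qaZ_inj (Z : 'M[R]_2) S w : (tdZ Z).1 ^+ 2 <= 4 * (tdZ Z).2 ->
  (forall p, p \in S -> p.1 ^+ 2 <= 4 * p.2 /\ p <> tdZ Z) -> qa Z S w = 0 -> w = 0.
Proof.
move=> hZ; elim: S => //= p S IH hS h; apply: IH.
  by move=> q hq; apply: hS; rewrite in_cons hq orbT.
have [h1 h2] := hS p (mem_head _ _).
by apply: (Ginj hZ h1 h2).
Qed.

Definition realp (p : R * R) : bool := 4 * p.2 == p.1 ^+ 2.
Definition lexle (p q : R * R) : bool := (p.2 < q.2) || ((p.2 == q.2) && (q.1 <= p.1)).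
Definition kle (p q : R * R) : bool :=
  if realp p then realp q && lexle p q else realp q || lexle p q.

Lemma lexle_refl p : lexle p p.
Proof. by rewrite /lexle eqxx lexx orbT. Qed.
Lemma lexle_trans p q r : lexle p q -> lexle q r -> lexle p r.
Proof.
rewrite /lexle => /orP[h1|/andP[/eqP e1 h1]] /orP[h2|/andP[/eqP e2 h2]].
- by rewrite (lt_trans h1 h2).
- by rewrite -e2 h1.
- by rewrite e1 h2.
- by rewrite e1 e2 eqxx (le_trans h2 h1) orbT.
Qed.
Lemma lexle_total p q : ~~ lexle p q -> lexle q p.
Proof.
rewrite /lexle negb_or negb_and -leNgt -ltNge => /andP[h1 h2].
move: h1; rewrite le_eqVlt => /orP[/eqP e|->//].
by move: h2; rewrite e eqxx /= => h; rewrite ltW ?orbT.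
Qed.
Lemma lexle_anti p q : lexle p q -> lexle q p -> p = q.
Proof.
case: p q => [a b] [c d]; rewrite /lexle /=.
move=> /orP[h1|/andP[/eqP e1 h1]] /orP[h2|/andP[/eqP e2 h2]].
- by move: (lt_trans h1 h2); rewrite ltxx.
- by move: h1; rewrite e2 ltxx.
- by move: h2; rewrite e1 ltxx.
- by rewrite e1; congr (_, _); apply/eqP; rewrite eq_le h1 h2.
Qed.

Lemma kle_refl p : kle p p.
Proof. by rewrite /kle; case: realp; rewrite lexle_refl ?orbT. Qed.
Lemma kle_trans p q r : kle p q -> kle q r -> kle p r.
Proof.
rewrite /kle; case: (realp p); case: (realp q); case: (realp r) => //=;
  try (by move=> h1 h2; apply: lexle_trans h1 h2).
Qed.
Lemma kle_total p q : ~~ kle p q -> kle q p.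
Proof.
rewrite /kle; case: (realp p); case: (realp q) => //= h; exact: lexle_total.
Qed.
Lemma kle_anti p q : kle p q -> kle q p -> p = q.
Proof.
rewrite /kle; case: (realp p); case: (realp q) => //=; exact: lexle_anti.
Qed.

End G.

Section Blocks.
Variable R : rcfType.
Variable n : nat.
Implicit Types (M : 'M[R]_n) (l b k : nat).

Definition posn l k (r : nat) : nat := if (k < l)%N then (k.*2 + r)%N else (k + l)%N.
Definition Zb M l k : 'M[R]_2 := if (k < l)%N then Z2 M k else (mxe M (k + l) (k + l))%:M.
Definition td M l k : R * R := tdZ (Zb M l k).
Definition Pb l k : 'M[R]_(2, n) := \matrix_(r < 2, i < n) ((i : nat) == posn l k r)%:R.
Definition supp l b (y : 'cV[R]_n) := forall i : 'I_n, (b <= blk l i)%N -> y i 0 = 0.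
Definition triu M l := forall i j : 'I_n, (blk l j < blk l i)%N -> M i j = 0.

Lemma blk_lt l (i : nat) : (l.*2 <= n -> i < n -> blk l i < nblocks n l)%N.
Proof. rewrite /blk /nblocks => hl hi; case: ifP => h; rewrite ?(-divn2); lia. Qed.

Lemma posn_lt l k r : (l.*2 <= n -> k < nblocks n l -> r < 2 -> posn l k r < n)%N.
Proof. rewrite /posn /nblocks => hl hk hr; case: ifP => h; lia. Qed.

Lemma blk_posn l k r : (r < 2)%N -> blk l (posn l k r) = k.
Proof. rewrite /posn => hr; case: ltnP => h; rewrite /blk; case: ifP => h2; rewrite -?divn2; lia. Qed.

Lemma blk_inv l (i : nat) : exists2 r, (r < 2)%N & i = posn l (blk l i) r.
Proof.
rewrite /posn /blk; case: ifP => h.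
  exists (i %% 2)%N; first by rewrite ltn_mod.
  have -> : (i./2 < l)%N by rewrite -divn2; lia.
  rewrite -divn2; have := divn_eq i 2; lia.
exists 0%N => //; have -> : ((i - l) < l)%N = false by lia.
lia.
Qed.

Lemma PbE l k (y : 'cV[R]_n) (r : 'I_2) (q : 'I_n) :
  (q : nat) = posn l k r -> (Pb l k *m y) r 0 = y q 0.
Proof.
move=> hq; rewrite mxE (bigD1 q) //= mxE -hq eqxx mul1r big1 ?addr0 // => j hj.
rewrite mxE -hq; case: eqP => [/val_inj e|]; last by rewrite mul0r.
by rewrite e eqxx in hj.
Qed.


Lemma supp_mul M l b y : triu M l -> supp l b y -> supp l b (M *m y).
Proof.
move=> hM hy i hi; rewrite mxE big1 // => j _.
case: (ltnP (blk l j) (blk l i)) => h; first by rewrite hM ?mul0r.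
by rewrite hy ?mulr0 //; apply: leq_trans h.
Qed.

Lemma supp0 l y : supp l 0 y -> y = 0.
Proof. by move=> h; apply/matrixP => i j; rewrite (ord1 j) mxE h. Qed.

Lemma suppS l k y : (l.*2 <= n)%N -> (k < nblocks n l)%N -> supp l k.+1 y -> Pb l k *m y = 0 -> supp l k y.
Proof.
move=> hl hk hy hP i hi; case: (ltnP k (blk l i)) => h; first exact: hy.
have e : blk l i = k by apply/eqP; rewrite eqn_leq h hi.
have [r hr hi2] := blk_inv l i.
have := @PbE l k y (Ordinal hr) i.
rewrite hP /= -e -hi2 => /(_ erefl) <-; by rewrite mxE.
Qed.

Lemma Pb_mul M l k y : (l.*2 <= n)%N -> (k < nblocks n l)%N -> triu M l -> supp l k.+1 y ->
  Pb l k *m (M *m y) = Zb M l k *m (Pb l k *m y).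
Proof.
move=> hl hk hM hy; apply/matrixP => r c; rewrite (ord1 c) {c}.
have hq := fun s : 'I_2 => posn_lt hl hk (ltn_ord s).
pose q (s : 'I_2) := Ordinal (hq s).
have hqb s : blk l (q s) = k by rewrite /= blk_posn.
rewrite (@PbE l k _ r (q r)) // mxE.
rewrite (bigID (fun j : 'I_n => blk l j == k)) /= [X in _ + X]big1 ?addr0; last first.
  move=> j hj; case: (ltnP (blk l j) k) => h; first by rewrite hM ?mul0r // hqb.
  by rewrite hy ?mulr0 // ltn_neqAle eq_sym hj h.
rewrite mxE sum2 (@PbE l k _ 0 (q 0)) // (@PbE l k _ 1 (q 1)) //.
have inb (j : 'I_n) : blk l j = k -> exists2 s : 'I_2, (j : nat) = posn l k s & True.
  move=> hj; have [r' hr' ej] := blk_inv l j; exists (Ordinal hr') => //; by rewrite ej hj.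
rewrite /Zb; case: ifP => hkl.
  have hZ s : Z2 M k r s = M (q r) (q s) by rewrite mxE -mxeE /= /posn hkl.
  have q01 : q 1 != q 0 by apply/eqP => /(congr1 val); rewrite /= /posn hkl; lia.
  rewrite (bigD1 (q 0)) ?hqb //= (bigD1 (q 1)) /=; last by rewrite blk_posn // eqxx q01.
  rewrite big_pred0 ?addr0 ?hZ // => j; apply/negbTE; apply/negP => /andP[/andP[/eqP hj hj0] hj1].
  have [s hs _] := inb j hj; move: hj0 hj1; case: s hs => [[|[|//]] hs2] /= hs.
    by rewrite (_ : j = q 0) ?eqxx //; apply: val_inj; rewrite /= hs.
  by rewrite (_ : j = q 1) ?eqxx ?andbF //; apply: val_inj; rewrite /= hs.
have eq0 s : q s = q 0 by apply: val_inj; rewrite /= /posn hkl.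
rewrite (bigD1 (q 0)) ?hqb //= big_pred0 ?addr0; last first.
  move=> j; apply/negbTE; apply/negP => /andP[/eqP hj hj0].
  have [s hs _] := inb j hj; move: hj0; rewrite (_ : j = q 0) ?eqxx //.
  by apply: val_inj; rewrite /= hs /posn hkl.
rewrite /scalar_mx !mxE -mxeE /= /posn hkl eq0.
have [->|->] : r = 0 \/ r = 1 by case: r => [[|[|//]] ?]; [left|right]; apply: val_inj.
  by rewrite eqxx mulr1n mulr0n mul0r addr0.
by rewrite eqxx mulr1n mulr0n mul0r add0r.
Qed.


Lemma supp_G M l b y p : triu M l -> supp l b y -> supp l b (Gm p M *m y).
Proof.
move=> hM hy; rewrite Gm_mul => i hi.
have h1 := supp_mul hM hy; have h2 := supp_mul hM h1.
move: (h1 i hi) (h2 i hi) (hy i hi); rewrite !mxE => -> -> ->; by rewrite !mulr0 subrr add0r.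
Qed.

Lemma Pb_G M l k y p : (l.*2 <= n)%N -> (k < nblocks n l)%N -> triu M l -> supp l k.+1 y ->
  Pb l k *m (Gm p M *m y) = Gm p (Zb M l k) *m (Pb l k *m y).
Proof.
move=> hl hk hM hy; rewrite !Gm_mul mulmxDr mulmxBr -!scalemxAr.
by rewrite !Pb_mul //; apply: supp_mul.
Qed.

Lemma supp_qa M l b y S : triu M l -> supp l b y -> supp l b (qa M S y).
Proof. by move=> hM hy; elim: S => //= p S IH; apply: supp_G. Qed.

Lemma Pb_qa M l k y S : (l.*2 <= n)%N -> (k < nblocks n l)%N -> triu M l -> supp l k.+1 y ->
  Pb l k *m qa M S y = qa (Zb M l k) S (Pb l k *m y).
Proof.
move=> hl hk hM hy; elim: S => //= p S IH.
by rewrite Pb_G ?IH //; apply: supp_qa.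
Qed.

Lemma kill M l b y : (l.*2 <= n)%N -> (b <= nblocks n l)%N -> triu M l -> supp l b y ->
  qa M (map (td M l) (iota 0 b)) y = 0.
Proof.
move=> hl; elim: b y => [|b IH] y hb hM hy; first by rewrite (supp0 hy) qa0.
rewrite (_ : iota 0 b.+1 = iota 0 b ++ [:: b]); last by rewrite -addn1 iotaD.
rewrite map_cat qa_cat /= IH //; first by rewrite ltnW.
apply: suppS => //; first exact: supp_G.
rewrite Pb_G //.
by rewrite /td CH2 mul0mx.
Qed.


Definition good M l : Prop :=
  [/\ (l.*2 <= n)%N, triu M l,
      (forall k, (k < nblocks n l)%N -> (td M l k).1 ^+ 2 <= 4 * (td M l k).2) &
      (forall k k', (k <= k')%N -> (k' < nblocks n l)%N -> kle (td M l k) (td M l k'))].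

Lemma step2 M l S z : good M l -> qa M S z = 0 ->
  forall m, (m <= nblocks n l)%N ->
  (forall b', (nblocks n l - m <= b')%N -> (b' < nblocks n l)%N ->
     forall p, p \in S -> p.1 ^+ 2 <= 4 * p.2 /\ p <> td M l b') ->
  supp l (nblocks n l - m) z.
Proof.
case=> hl hM hd hs hz; elim=> [|m IH] hm hS.
  by move=> i; rewrite subn0 leqNgt blk_lt.
have hb : (nblocks n l - m.+1 < nblocks n l)%N by lia.
have e : (nblocks n l - m.+1).+1 = (nblocks n l - m)%N by lia.
have IH' : supp l (nblocks n l - m.+1).+1 z.
  rewrite e; apply: IH; first by lia.
  by move=> b' h1 h2; apply: hS => //; lia.
apply: (suppS (l := l) (k := nblocks n l - m.+1)) => //; apply: (qaZ_inj (Z := Zb M l (nblocks n l - m.+1)) (S := S)).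
- exact: hd.
- by move=> p hp; apply: (hS _ (leqnn _) hb p hp).
- by rewrite -Pb_qa // hz mulmx0.
Qed.

Lemma col_delta (U : 'M[R]_n) (i j : 'I_n) : (U *m (delta_mx j 0 : 'cV[R]_n)) i 0 = U i j.
Proof.
rewrite mxE (bigD1 j) //= mxE !eqxx mulr1 big1 ?addr0 // => k hk.
by rewrite mxE (negbTE hk) mulr0.
Qed.

Lemma core (A B U : 'M[R]_n) l lh c : good A l -> good B lh -> B *m U = U *m A ->
  forall i j : 'I_n, kle (td A l (blk l j)) c -> ~~ kle (td B lh (blk lh i)) c -> U i j = 0.
Proof.
move=> gA gB hBU i j hj hi.
have [hlA hMA hdA hsA] := gA; have [hlB hMB hdB hsB] := gB.
set S := map (td A l) (filter (fun k => kle (td A l k) c) (iota 0 (nblocks n l))).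
set ej : 'cV[R]_n := delta_mx j 0.
have hbj := blk_lt hlA (ltn_ord j).
have hej : supp l (blk l j).+1 ej.
  move=> k hk; rewrite mxE; case: eqP => [e|]; last by rewrite andFb.
  by rewrite e ltnn in hk.
have step1 : qa A S ej = 0.
  rewrite /S (_ : iota 0 (nblocks n l) = iota 0 (blk l j).+1 ++ iota (blk l j).+1 (nblocks n l - (blk l j).+1)); last first.
    by rewrite -iotaD; congr iota; lia.
  rewrite filter_cat map_cat qa_cat.
  rewrite (all_filterP _); last first.
    apply/allP => k; rewrite mem_iota add0n => /andP[_ hk].
    by apply: kle_trans hj; apply: hsA.
  apply: kill => //.
  by apply: supp_qa.
have hz : qa B S (U *m ej) = 0 by rewrite (qa_inter S ej hBU) step1 mulmx0.
have hbi := blk_lt hlB (ltn_ord i).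
have := step2 gB hz (m := nblocks n lh - blk lh i).
rewrite (_ : (nblocks n lh - (nblocks n lh - blk lh i))%N = blk lh i); last by lia.
move=> /(_ (leq_subr _ _)) H.
rewrite -col_delta; apply: H => //.
move=> b' h1 h2 p; rewrite /S => /mapP[k]; rewrite mem_filter mem_iota add0n => /andP[hk /andP[_ hk2]] ->.
split; first exact: hdA.
move=> e; move: hi; rewrite (kle_trans (hsB _ _ h1 h2)) //.
by rewrite -e.
Qed.

End Blocks.

Section Final.
Variable R : rcfType.
Variable n : nat.

Lemma blk_mono l (p q : nat) : (p <= q)%N -> (blk l p <= blk l q)%N.
Proof. rewrite /blk => h; case: ifP => h1; case: ifP => h2; rewrite -?divn2; lia. Qed.

Lemma dc_card (X Y : {set 'I_n}) (i : 'I_n) :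
  (forall p q : 'I_n, p \in X -> (q <= p)%N -> q \in X) ->
  (forall p q : 'I_n, p \in Y -> (q <= p)%N -> q \in Y) ->
  #|X| = #|Y| -> i \in X -> i \in Y.
Proof.
move=> dX dY hc hi; apply/negPn/negP => hY.
have : Y \proper X.
  apply/properP; split; last by exists i.
  apply/subsetP => q hq; apply: (dX i) => //.
  case: (leqP q i) => // h; case/negP: hY; apply: (dY q) => //; exact: ltnW.
by move/proper_card; rewrite hc ltnn.
Qed.

Lemma main_keys (A B U : 'M[R]_n) l lh : good A l -> good B lh ->
  U^T *m U = 1%:M -> B *m U = U *m A ->
  forall i j : 'I_n, U i j != 0 -> td A l (blk l i) = td A l (blk l j).
Proof.
move=> gA gB hU hBU.
have hU' : U *m U^T = 1%:M by apply: mulmx1C.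
have hUt : A *m U^T = U^T *m B.
  by rewrite -[U^T *m B]mulmx1 -hU' !mulmxA -[U^T *m B *m U]mulmxA hBU mulmxA hU mul1mx.
set kA := fun p : 'I_n => td A l (blk l p).
set kB := fun p : 'I_n => td B lh (blk lh p).
have c1 := core gA gB hBU.
have c2 : forall c (i j : 'I_n), kle (kB i) c -> ~~ kle (kA j) c -> U i j = 0.
  by move=> c i j h1 h2; have := core gB gA hUt h1 h2; rewrite mxE.
have [hlA _ _ hsA] := gA; have [hlB _ _ hsB] := gB.
have dA c : forall p q : 'I_n, p \in [set x | kle (kA x) c] -> (q <= p)%N -> q \in [set x | kle (kA x) c].
  move=> p q; rewrite !inE => hp hq; apply: kle_trans hp; apply: hsA; first exact: blk_mono.
  exact: blk_lt.
have dB c : forall p q : 'I_n, p \in [set x | kle (kB x) c] -> (q <= p)%N -> q \in [set x | kle (kB x) c].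
  move=> p q; rewrite !inE => hp hq; apply: kle_trans hp; apply: hsB; first exact: blk_mono.
  exact: blk_lt.
have hcard c : #|[set x | kle (kA x) c]| = #|[set x | kle (kB x) c]|.
  set P := [set x | kle (kA x) c]; set Q := [set x | kle (kB x) c].
  have eQ : \sum_(i in Q) \sum_(j in P) U i j * U i j = #|Q|%:R.
    rewrite -sum1_card natr_sum; apply: eq_bigr => i hi.
    have := congr1 (fun M : 'M[R]_n => M i i) hU'; rewrite !mxE eqxx /= => <-.
    rewrite [RHS](bigID (fun j => j \in P)) /= [X in _ = _ + X]big1 ?addr0.
      by apply: eq_bigr => j _; rewrite mxE.
    move=> j hj; rewrite mxE (c2 c i j) ?mul0r //; by move: hi hj; rewrite !inE.
  have eP : \sum_(j in P) \sum_(i in Q) U i j * U i j = #|P|%:R.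
    rewrite -sum1_card natr_sum; apply: eq_bigr => j hj.
    have := congr1 (fun M : 'M[R]_n => M j j) hU; rewrite !mxE eqxx /= => <-.
    rewrite [RHS](bigID (fun i => i \in Q)) /= [X in _ = _ + X]big1 ?addr0.
      by apply: eq_bigr => i _; rewrite mxE.
    move=> i hi; rewrite mxE (c1 c i j) ?mul0r //; by move: hi hj; rewrite !inE.
  apply/eqP; rewrite -(eqr_nat R) -eP -eQ; apply/eqP; exact: exchange_big.
have keq (i : 'I_n) : kA i = kB i.
  apply: kle_anti.
    have : i \in [set x | kle (kB x) (kB i)] by rewrite inE kle_refl.
    by move/(dc_card (dB _) (dA _) (esym (hcard _))); rewrite inE.
  have : i \in [set x | kle (kA x) (kA i)] by rewrite inE kle_refl.
  by move/(dc_card (dA _) (dB _) (hcard _)); rewrite inE.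
move=> i j hij; rewrite -/(kA i) -/(kA j); apply: kle_anti.
  rewrite keq; apply/negPn/negP => h; case/eqP: hij; exact: (c1 (kA j) i j (kle_refl _) h).
apply/negPn/negP => h; case/eqP: hij; apply: (c2 (kA i) i j) => //; by rewrite -keq kle_refl.
Qed.

End Final.

Section Link.
Variable R : rcfType.

Lemma cplx_disc (Z : 'M[R]_2) :
  (forall lam, root (map_poly (real_complex R) (char_poly Z)) lam -> complex.Im lam != 0) ->
  (tdZ Z).1 ^+ 2 < 4 * (tdZ Z).2.
Proof.
move=> h; rewrite ltNge; apply/negP => hle.
move: h hle; rewrite char_poly2 /tdZ /=.
move: (Z 0 0 + Z 1 1) (Z 0 0 * Z 1 1 - Z 0 1 * Z 1 0) => t d h hle.
set r := Num.sqrt (t ^+ 2 - 4 * d).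
have hr : r ^+ 2 = t ^+ 2 - 4 * d by rewrite sqr_sqrtr // subr_ge0.
suff hroot : root (map_poly (real_complex R) ('X^2 - t%:P * 'X + d%:P)) (real_complex R ((t + r) / 2)).
  by move: (h _ hroot); rewrite /= eqxx.
rewrite root_quad /= !mulr0 subrr eqxx andbT expr0n /= subr0.
apply/eqP; rewrite [LHS](_ : _ = (r ^+ 2 - (t ^+ 2 - 4 * d)) / 4); last by field.
by rewrite hr subrr mul0r.
Qed.

Lemma cplx_root (Z : 'M[R]_2) : (tdZ Z).1 ^+ 2 < 4 * (tdZ Z).2 ->
  exists lam, [/\ root (map_poly (real_complex R) (char_poly Z)) lam,
     Normc.normc lam = Num.sqrt (tdZ Z).2 & complex.Re lam = (tdZ Z).1 / 2].
Proof.
rewrite char_poly2 /tdZ /=.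
move: (Z 0 0 + Z 1 1) (Z 0 0 * Z 1 1 - Z 0 1 * Z 1 0) => t d h.
set r := Num.sqrt (4 * d - t ^+ 2).
have hr : r ^+ 2 = 4 * d - t ^+ 2 by rewrite sqr_sqrtr // subr_ge0 ltW.
exists (Complex (t / 2) (r / 2)); split => //.
  rewrite root_quad /=; apply/andP; split; apply/eqP.
    rewrite [LHS](_ : _ = (4 * d - t ^+ 2 - r ^+ 2) / 4); last by field.
    by rewrite hr subrr mul0r.
  by field.
rewrite /Normc.normc; congr Num.sqrt.
rewrite [LHS](_ : _ = (t ^+ 2 + r ^+ 2) / 4); last by field.
by rewrite hr; field.
Qed.

Variable n : nat.

Lemma tdR (A : 'M[R]_n) l k : (l <= k)%N ->
  td A l k = (mxe A (k + l) (k + l) + mxe A (k + l) (k + l),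
              mxe A (k + l) (k + l) * mxe A (k + l) (k + l) - 0 * 0).
Proof. by move=> h; rewrite /td /Zb ltnNge h /tdZ /scalar_mx !mxE /= ?mulr1n ?mulr0n. Qed.

Lemma tdC (A : 'M[R]_n) l k : (k < l)%N -> td A l k = tdZ (Z2 A k).
Proof. by move=> h; rewrite /td /Zb h. Qed.

Lemma witness (A : 'M[R]_n) l k : ((k < l)%N -> (td A l k).1 ^+ 2 < 4 * (td A l k).2) ->
  exists lam, [/\ block_eig l A k lam, Normc.normc lam = Num.sqrt (td A l k).2 &
                  complex.Re lam = (td A l k).1 / 2].
Proof.
move=> hd; rewrite /block_eig; case: ltnP => hk.
  by rewrite tdC // in hd *; apply: cplx_root; apply: hd.
exists (real_complex R (mxe A (k + l) (k + l))); rewrite tdR //; split => //=.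
  by congr Num.sqrt; rewrite expr0n /= addr0 mulr0 subr0 expr2.
by field.
Qed.


Lemma realp_td (A : 'M[R]_n) l k : ((k < l)%N -> (td A l k).1 ^+ 2 < 4 * (td A l k).2) ->
  realp (td A l k) = ~~ (k < l)%N.
Proof.
move=> hd; case: ltnP => hk /=.
  by rewrite /realp eq_sym lt_eqF //; apply: hd.
by rewrite tdR // /realp /=; apply/eqP; ring.
Qed.

Lemma disc_of (A : 'M[R]_n) l : ordered_real_schur l A ->
  forall k, (k < l)%N -> (td A l k).1 ^+ 2 < 4 * (td A l k).2.
Proof.
case=> [[hl hM hI] hO] k hk; rewrite tdC //; apply: cplx_disc => lam hlam.
by apply: (hI k hk); rewrite /block_eig hk.
Qed.

Lemma good_of (A : 'M[R]_n) l : ordered_real_schur l A -> good A l.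
Proof.
move=> hA; have hdisc := disc_of hA; case: hA => [[hl hM hI] hO].
have hd k : (k < nblocks n l)%N -> (td A l k).1 ^+ 2 <= 4 * (td A l k).2.
  move=> hk; case: (ltnP k l) => h; first by apply: ltW; apply: hdisc.
  by rewrite tdR //=; rewrite le_eqVlt; apply/orP; left; apply/eqP; ring.
split => // k k' hkk hk'.
rewrite leq_eqVlt in hkk; case/orP: hkk => [/eqP <-|hkk]; first exact: kle_refl.
have r1 := realp_td (hdisc k); have r2 := realp_td (hdisc k').
case: (boolP ((k' < l) || (l <= k))%N) => hc; last first.
  move: hc; rewrite negb_or -leqNgt -ltnNge => /andP[h1 h2].
  by rewrite /kle r1 r2 h2 ltnNge h1.
have [lam [e1 n1 re1]] := witness (hdisc k); have [lam' [e2 n2 re2]] := witness (hdisc k').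
have [hle heq] := hO k k' (introT andP (conj hkk hk')) hc lam lam' e1 e2.
rewrite n1 n2 in hle heq; rewrite re1 re2 in heq.
have hd0 : 0 <= (td A l k').2.
  have := hd k' hk'; have := sqr_ge0 (td A l k').1; lra.
have lex : lexle (td A l k) (td A l k').
  move: hle; rewrite /lexle ler_sqrt // le_eqVlt => /orP[/eqP e|->//].
  have := heq (congr1 _ e); rewrite e eqxx ltxx /= => h; lra.
have er : realp (td A l k) = realp (td A l k').
  rewrite r1 r2; case/orP: hc => h; last by rewrite !ltnNge h (leq_trans h (ltnW hkk)).
  by rewrite h (ltn_trans hkk h).
by rewrite /kle er; case: (realp _); rewrite lex ?orbT.
Qed.

Lemma same_group_of (A : 'M[R]_n) l (p q : 'I_n) : ordered_real_schur l A ->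
  td A l (blk l p) = td A l (blk l q) -> same_group l A p q.
Proof.
move=> hA e; have hdisc := disc_of hA; have [hl hM hd hs] := good_of hA.
rewrite /same_group /same_run => t /andP[ht1 ht2].
have hk := blk_lt hl (ltn_ord p); have hk' := blk_lt hl (ltn_ord q).
have htn : (t < nblocks n l)%N by apply: leq_ltn_trans ht2 _; rewrite gtn_max hk hk'.
have emin : td A l (minn (blk l p) (blk l q)) = td A l (blk l p).
  by rewrite /minn; case: ifP.
have emax : td A l (maxn (blk l p) (blk l q)) = td A l (blk l p).
  by rewrite /maxn; case: ifP.
have ett : td A l t = td A l (blk l p).
  apply: kle_anti.
    rewrite -emax; apply: hs => //; by rewrite gtn_max hk hk'.
  rewrite -emin; apply: hs => //.
set k := blk l p in ett *.
have rk := realp_td (hdisc k); have rt := realp_td (hdisc t).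
move=> lam; rewrite /block_eig.
case: (ltnP k l) => hkl.
  have htl : (t < l)%N by apply/negPn; rewrite -rt ett rk hkl.
  rewrite htl; rewrite !tdC // in ett.
  have e1 := congr1 fst ett; have e2 := congr1 snd ett; rewrite /= in e1 e2.
  by rewrite !char_poly2 e1 e2.
have htl : (l <= t)%N by rewrite leqNgt -rt ett rk ltnNge hkl.
rewrite ltnNge htl /=; rewrite !tdR // in ett.
have e1 := congr1 fst ett; rewrite /= in e1.
have -> : mxe A (t + l) (t + l) = mxe A (k + l) (k + l) by lra.
by [].
Qed.

End Link.

Unset Implicit Arguments.
Set Strict Implicit.

Theorem theorem9p2 (R : rcfType) (n l lh : nat) (A Ah U : 'M[R]_n) :
  ordered_real_schur l A -> ordered_real_schur lh Ah ->
  orthogonal_mx U -> Ah *m U = U *m A ->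
  (forall i j : 'I_n, ~ same_group l A i j -> U i j = 0) /\
  (forall i j : 'I_n, same_group l A i j ->
     \sum_(k : 'I_n | same_group_b l A i k) U k i * U k j = (i == j)%:R).
Proof.
move=> hA hB hU hBU.
have gA := good_of hA; have gB := good_of hB.
have keys := main_keys gA gB hU hBU.
have part1 : forall i j : 'I_n, ~ same_group l A i j -> U i j = 0.
  move=> i j hij; apply/eqP/negPn/negP => h; apply: hij; apply: same_group_of => //; exact: keys.
split => // i j hij.
have := congr1 (fun M : 'M[R]_n => M i j) hU; rewrite /scalar_mx !mxE => <-.
rewrite [RHS](bigID (fun k : 'I_n => same_group_b l A i k)) /= [X in _ = _ + X]big1 ?addr0.
  by apply: eq_bigr => k _; rewrite mxE.
move=> k hk; rewrite mxE.
suff -> : U k i = 0 by rewrite mul0r.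
apply/eqP/negPn/negP => h; move/negP: hk; apply; apply/boolp.asboolP.
by apply: same_group_of => //; symmetry; apply: keys.
Qed.
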